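(* For all integers $K>t>1$, $$s\!\left(\binom{K}{t},\ K,\ \binom{K-1}{t-1}\right)=\frac{\binom{K}{t}(K-t)}{t+1}=\binom{K}{t+1}.$$
   Context: A placement delivery array $S$-PDA$(F,K,Z)$ is an $F\times K$ array $R=(r_{j,k})$, $1\le j\le F$, $1\le k\le K$, over a finite set $S$ such that: (1) each cell is either empty or contains an element of $S$; (2) each column contains exactly $Z$ empty cells; (3) each element of $S$ occurs at most once in each row and at most once in each column; (4) if two distinct nonempty cells satisfy $r_{j_1,k_1}=r_{j_2,k_2}=t\in S$, then the cells $r_{j_1,k_2}$ and $r_{j_2,k_1}$ are empty. For integers $F,K\ge1$, $0\le Z\le F$, define $s(F,K,Z)=\min\{|S| : \text{there exists an } S\text{-PDA}(F,K,Z)\}$. *)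

(* Defs.v *)
From mathcomp Require Import all_boot.
Set Implicit Arguments. Unset Strict Implicit. Unset Printing Implicit Defensive.

(* An S-PDA(F,K,Z): an F x K array whose cells are either empty (None)
   or contain an element of the finite set S (Some s). *)
Definition is_PDA (S : finType) (F K : nat) (Z : nat) (R : 'I_F -> 'I_K -> option S) : Prop :=
  (forall k : 'I_K, #|[set j : 'I_F | R j k == None]| = Z) /\
  (forall (j : 'I_F) (k1 k2 : 'I_K) (s : S),
      R j k1 = Some s -> R j k2 = Some s -> k1 = k2) /\
  (forall (j1 j2 : 'I_F) (k : 'I_K) (s : S),
      R j1 k = Some s -> R j2 k = Some s -> j1 = j2) /\
  (forall (j1 j2 : 'I_F) (k1 k2 : 'I_K) (s : S),
      (j1, k1) <> (j2, k2) -> R j1 k1 = Some s -> R j2 k2 = Some s ->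
      R j1 k2 = None /\ R j2 k1 = None).

Definition is_min_PDA_size (F K Z n : nat) : Prop :=
  (exists R : 'I_F -> 'I_K -> option 'I_n, is_PDA Z R) /\
  (forall (S : finType) (R : 'I_F -> 'I_K -> option S), is_PDA Z R -> n <= #|S|).

(* Main.v *)
Require Import Defs.
From mathcomp Require Import all_boot all_order all_algebra zify ring lra.

Lemma count_contain (K t : nat) (k : 'I_K) : 0 < t ->
  #|[set B : {set 'I_K} | (#|B| == t) && (k \in B)]| = 'C(K.-1, t.-1).
Proof.
move=> t0.
have inj : {in [set B : {set 'I_K} | (#|B| == t) && (k \in B)] &, injective (fun B => B :\ k)}.
  move=> B1 B2; rewrite !inE => /andP [_ h1] /andP [_ h2] e.
  by rewrite -(setD1K h1) -(setD1K h2) e.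
rewrite -(card_in_imset inj).
have -> : [set B :\ k | B in [set B : {set 'I_K} | (#|B| == t) && (k \in B)]] =
          [set B : {set 'I_K} | B \subset [set~ k] & #|B| == t.-1].
  apply/eqP; rewrite eqEsubset; apply/andP; split; apply/subsetP => B.
    case/imsetP => B' HB' ->; rewrite inE in HB'; case/andP: HB' => /eqP cB kB.
    rewrite inE; apply/andP; split.
      by apply/subsetP => x; rewrite in_setD1 in_setC1 => /andP [].
    by rewrite (cardsD1 k) kB in cB; rewrite -cB.
  rewrite inE => /andP [/subsetP sB /eqP cB].
  have kB : k \notin B by apply/negP => /sB; rewrite in_setC1 eqxx.
  apply/imsetP; exists (k |: B); last by rewrite setU1K.
  by rewrite inE cardsU1 kB cB setU11 add1n prednK // eqxx.
by rewrite cards_draws cardsC1 card_ord.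
Qed.

Section Cons.
Variables (K t n : nat).
Hypothesis t0 : 0 < t.
Let P := [set A : {set 'I_K} | #|A| == t].
Let Q := [set A : {set 'I_K} | #|A| == t.+1].
Hypothesis eQ : #|Q| = n.
Variable x0 : {set 'I_K}.
Hypothesis Hx0 : x0 \in Q.

Let eP : #|P| = 'C(K, t). Proof. by rewrite card_draws card_ord. Qed.

Definition Arow (j : 'I_('C(K, t))) : {set 'I_K} := enum_val (cast_ord (esym eP) j).
Definition sym (U : {set 'I_K}) : 'I_n := cast_ord eQ (enum_rank_in Hx0 U).
Definition Rc (j : 'I_('C(K, t))) (k : 'I_K) : option 'I_n :=
  if k \in Arow j then None else Some (sym (k |: Arow j)).

Lemma Arow_card j : #|Arow j| = t.
Proof. by have := enum_valP (cast_ord (esym eP) j); rewrite inE => /eqP. Qed.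

Lemma Arow_inj : injective Arow.
Proof. by move=> j1 j2 /enum_val_inj /cast_ord_inj. Qed.

Lemma sym_inj U V : U \in Q -> V \in Q -> sym U = sym V -> U = V.
Proof.
move=> HU HV /cast_ord_inj e.
by rewrite -(enum_rankK_in Hx0 HU) -(enum_rankK_in Hx0 HV) e.
Qed.

Lemma inQ j k : k \notin Arow j -> k |: Arow j \in Q.
Proof. by move=> h; rewrite inE cardsU1 h Arow_card. Qed.

Lemma RcSome j k s : Rc j k = Some s -> k \notin Arow j /\ sym (k |: Arow j) = s.
Proof. rewrite /Rc; case: ifP => // /negbT h [<-]; by split. Qed.

Lemma Rc_PDA : is_PDA 'C(K.-1, t.-1) Rc.
Proof.
split.
  move=> k; rewrite -(@count_contain K t k t0).
  have -> : [set j | Rc j k == None] = [set j | k \in Arow j].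
    by apply/setP => j; rewrite !inE /Rc; case: ifP.
  have inj : {in [set j | k \in Arow j] &, injective Arow} by move=> ? ? _ _; apply: Arow_inj.
  rewrite -(card_in_imset inj); congr #|pred_of_set _|.
  apply/eqP; rewrite eqEsubset; apply/andP; split; apply/subsetP => B.
    by case/imsetP => j; rewrite !inE => kj ->; rewrite Arow_card eqxx kj.
  rewrite inE => /andP [cB kB]; apply/imsetP.
  have HB : B \in P by rewrite inE.
  exists (cast_ord eP (enum_rank_in HB B)); last first.
    by rewrite /Arow cast_ordK enum_rankK_in.
  by rewrite inE /Arow cast_ordK enum_rankK_in.
split.
  move=> j k1 k2 s /RcSome [h1 e1] /RcSome [h2 e2].
  have := sym_inj _ _ (inQ _ _ h1) (inQ _ _ h2) (etrans e1 (esym e2)) => e.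
  by have := setU11 k1 (Arow j); rewrite e in_setU1 (negbTE h1) orbF => /eqP.
split.
  move=> j1 j2 k s /RcSome [h1 e1] /RcSome [h2 e2].
  have := sym_inj _ _ (inQ _ _ h1) (inQ _ _ h2) (etrans e1 (esym e2)) => e.
  by apply: Arow_inj; rewrite -(setU1K h1) -(setU1K h2) e.
move=> j1 j2 k1 k2 s ne /RcSome [h1 e1] /RcSome [h2 e2].
have e := sym_inj _ _ (inQ _ _ h1) (inQ _ _ h2) (etrans e1 (esym e2)).
have nk : k1 != k2.
  apply/negP => /eqP ek; subst k2; apply: ne; congr (_, _).
  by apply: Arow_inj; rewrite -(setU1K h1) -(setU1K h2) e.
have a1 : k2 \in Arow j1.
  by have := setU11 k2 (Arow j2); rewrite -e in_setU1 eq_sym (negbTE nk).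
have a2 : k1 \in Arow j2.
  by have := setU11 k1 (Arow j1); rewrite e in_setU1 (negbTE nk).
by rewrite /Rc a1 a2.
Qed.
End Cons.


Import Order.TTheory GRing.Theory Num.Theory.

Lemma cardS (T : finType) (P : pred T) : #|[set x | P x]| = \sum_x (P x : nat).
Proof. rewrite -sum1_card big_mkcond; apply: eq_bigr => x _; rewrite inE; by case: (P x). Qed.

Section Low.
Variables (S : finType) (F K Z : nat) (R : 'I_F -> 'I_K -> option S).
Hypothesis HR : is_PDA Z R.

Let N j := [set k | R j k == None].
Let C s := [set p : 'I_F * 'I_K | R p.1 p.2 == Some s].

Lemma lowA s j k : R j k = Some s -> #|C s| <= #|N j|.+1.
Proof.
move=> Hjk; move: HR => [_ [_ [Hcol H4]]].
have inj : {in C s &, injective snd}.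
  move=> [j1 k1] [j2 k2]; rewrite !inE /= => /eqP h1 /eqP h2 /= ek; subst k2.
  by rewrite (Hcol _ _ _ _ h1 h2).
rewrite -(card_in_imset inj).
apply: leq_trans (_ : #|k |: N j| <= _); last first.
  by rewrite cardsU1; case: (k \notin _).
apply: subset_leq_card; apply/subsetP => x /imsetP [[j' k'] Hp ->] /=.
rewrite !inE; rewrite inE /= in Hp.
case: (eqVneq (j',k') (j,k)) => [[_ ->]|ne]; first by rewrite eqxx.
apply/orP; right; have := H4 _ _ _ _ _ (elimN eqP ne) (eqP Hp) Hjk.
by case=> _ ->.
Qed.

Local Open Scope ring_scope.

Lemma arith1 (t a b : nat) : (a <= b.+1)%N -> (2 * t + 1)%N%:Z - b%:Z <= (2 * t + 2)%N%:Z - a%:Z.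
Proof. lia. Qed.
Lemma arith2 (t g : nat) : ((2 * t + 2)%N%:Z - g%:Z) * g%:R <= ((t + 1) ^ 2)%N%:Z.
Proof. rewrite natz. have : 0 <= (g%:Z - t%:Z - 1)^+2 by apply: sqr_ge0. nia. Qed.

Lemma lowB (t : nat) s :
  \sum_(p in C s) ((2 * t + 1)%N%:Z - (#|N p.1|)%:Z) <= ((t + 1) ^ 2)%N%:Z.
Proof.
apply: le_trans (_ : \sum_(p in C s) ((2 * t + 2)%N%:Z - (#|C s|)%:Z) <= _).
  apply: ler_sum => [[j k]]; rewrite inE /= => /eqP Hjk.
  have := lowA _ _ _ Hjk; exact: arith1.
rewrite sumr_const -mulr_natr.
exact: arith2.
Qed.

Lemma lowC (f : 'I_F * 'I_K -> int) :
  \sum_(s : S) \sum_(p in C s) f p = \sum_(p in [set p : 'I_F * 'I_K | R p.1 p.2 != None]) f p.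
Proof.
rewrite (eq_bigr (fun s => \sum_p (if R p.1 p.2 == Some s then f p else 0))); last first.
  by move=> s _; rewrite big_mkcond; apply: eq_bigr => p _; rewrite inE.
rewrite exchange_big [RHS]big_mkcond; apply: eq_bigr => p _; rewrite inE.
case: (R p.1 p.2) => [s0|] /=; last by rewrite big1.
rewrite -big_mkcond (big_pred1 s0) // => s /=.

Qed.

Lemma lowD (x : 'I_F -> int) :
  \sum_(p in [set p : 'I_F * 'I_K | R p.1 p.2 != None]) x p.1 = \sum_j x j *+ (K - #|N j|).
Proof.
have -> : \sum_(p in [set p : 'I_F * 'I_K | R p.1 p.2 != None]) x p.1 =
   \sum_j \sum_(k in ~: N j) x j.
  rewrite pair_big_dep /=; apply: eq_bigl => [[j k]] /=; by rewrite !inE.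
apply: eq_bigr => j _; rewrite sumr_const; congr (_ *+ _).
have := cardsC (N j); rewrite card_ord; lia.
Qed.

Lemma lowE : (\sum_j #|N j| = K * Z)%N.
Proof.
move: HR => [Hc _].
rewrite (eq_bigr (fun j => \sum_k (R j k == None : nat))%N); last by move=> j _; rewrite cardS.
rewrite exchange_big /= (eq_bigr (fun k => Z)%N) ?sum_nat_const ?card_ord //.
by move=> k _; rewrite -(Hc k) cardS.
Qed.

Lemma arith3 (t L e : nat) : (e <= L)%N ->
  (L * (2 * t + 1))%N%:Z - (t ^ 2)%N%:Z - ((L + 1) * e)%N%:Z <= ((2 * t + 1)%N%:Z - e%:Z) *+ (L - e).
Proof.
move=> leK; rewrite -mulr_natr natz.
have : 0 <= (e%:Z - t%:Z)^+2 by apply: sqr_ge0. nia.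
Qed.

Lemma lowFinal t : (t <= K)%N -> (K * Z = t * F)%N -> (F * (K - t) <= t.+1 * #|S|)%N.
Proof.
move=> htK hKZ.
pose x j := (2 * t + 1)%N%:Z - (#|N j|)%:Z.
have H1 : \sum_(s : S) \sum_(p in C s) x p.1 <= ((t + 1) ^ 2)%N%:Z *+ #|S|.
  rewrite -sumr_const; apply: ler_sum => s _; exact: lowB.
rewrite lowC lowD in H1.
have H2 : \sum_j ((K * (2 * t + 1))%N%:Z - (t ^ 2)%N%:Z - ((K + 1) * #|N j|)%N%:Z)
          <= \sum_j x j *+ (K - #|N j|).
  apply: ler_sum => j _; apply: arith3.
  by have := max_card (mem (N j)); rewrite card_ord.
rewrite sumrB sumr_const card_ord in H2.
rewrite -(big_morph Posz PoszD (erefl _)) -big_distrr /= lowE hKZ in H2.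
have H3 := le_trans H2 H1.
have H4 : ((t+1) * (F * (K - t)) <= (t+1) * ((t + 1) * #|S|))%N.
  move: H3; rewrite -mulr_natr natz. nia.
by rewrite leq_pmul2l ?addn1 // in H4.
Qed.
End Low.

Theorem mainTheorem11 (K t : nat) (Ht1 : 1 < t) (HtK : t < K) :
  is_min_PDA_size 'C(K, t) K 'C(K.-1, t.-1) ('C(K, t) * (K - t) %/ t.+1) /\
  'C(K, t) * (K - t) %/ t.+1 = 'C(K, t.+1) /\
  t.+1 %| 'C(K, t) * (K - t).
Proof.
have t0 : 0 < t by apply: ltnW.
have eB : 'C(K, t) * (K - t) = t.+1 * 'C(K, t.+1) by rewrite mul_bin_left mulnC.
have edv : 'C(K, t) * (K - t) %/ t.+1 = 'C(K, t.+1) by rewrite eB mulKn.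
split; last by rewrite edv; split => //; rewrite eB dvdn_mulr.
rewrite edv; split.
  have eQ : #|[set A : {set 'I_K} | #|A| == t.+1]| = 'C(K, t.+1) by rewrite card_draws card_ord.
  have /card_gt0P [x0 Hx0] : 0 < #|[set A : {set 'I_K} | #|A| == t.+1]| by rewrite eQ bin_gt0.
  by exists (@Rc K t _ eQ _ Hx0); apply: Rc_PDA.
move=> S R HR.
have hKZ : K * 'C(K.-1, t.-1) = t * 'C(K, t) by rewrite mul_bin_diag prednK.
have := @lowFinal S _ _ _ R HR t (ltnW HtK) hKZ.
by rewrite eB leq_pmul2l.
Qed.
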